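(* Let $G=(V,E)$ be a simple undirected graph with $V=[n]$ and let $k\ge 1$ be an integer. Then $\vartheta'(K_k\,\Box\, G)=\theta^2_k(G)\ge\alpha_k(G)$.
   Context: $\alpha_k(G)$ is the maximum number of vertices of an induced subgraph of $G$ that is $k$-colorable (adjacent vertices receive different colors). $K_k$ is the complete graph on vertex set $[k]$. The Cartesian product $K_k\Box G$ has vertex set $[k]\times V$, with $(u,i)$ and $(v,j)$ adjacent iff ($u=v$ and $\{i,j\}\in E$) or ($i=j$ and $u\ne v$). For a graph $H$ on vertex set $W$, the Schrijver number is $\vartheta'(H)=\max\{\langle J,Y\rangle: Y\in\mathbb S^{|W|},\ Y_{ab}=0 \text{ for all edges } \{a,b\} \text{ of } H,\ \mathrm{trace}(Y)=1,\ Y\succeq0,\ Y\ge0\}$, where $J$ is the all-ones matrix. $\theta^2_k(G)$ is the optimal value of: maximize $\sum_{r\in[k]}\sum_{i\in[n]}Y^{rr}_{ii}$ over $Y\in\mathbb S^{nk}$ (viewed as a $k\times k$ array of $n\times n$ blocks $Y^{rl}$) subject to $Y^{rr}_{ij}=0$ for $\{i,j\}\in E$, $r\in[k]$; $Y^{rl}_{ii}=0$ for $i\in[n]$, $r,l\in[k]$, $r\ne l$; $Y\ge0$ entrywise; $\begin{bmatrix}1&\mathrm{diag}(Y)^{\top}\\ \mathrm{diag}(Y)&Y\end{bmatrix}\succeq 0$. *)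

(* Defs.v *)
From HB Require Import structures.
From mathcomp Require Import all_boot all_order all_algebra.
From mathcomp Require Import boolp classical_sets reals.
Set Implicit Arguments. Unset Strict Implicit. Unset Printing Implicit Defensive.
Import Order.TTheory GRing.Theory Num.Theory.
Local Open Scope ring_scope.
Local Open Scope classical_set_scope.

Definition simple_graph (T : finType) (e : rel T) : Prop :=
  (forall x y, e x y = e y x) /\ (forall x, ~~ e x x).

Definition symm {R : realType} {T : finType} (Y : T -> T -> R) : Prop :=
  forall a b, Y a b = Y b a.

Definition psd {R : realType} {T : finType} (Y : T -> T -> R) : Prop :=
  symm Y /\ forall x : T -> R, 0 <= \sum_(a : T) \sum_(b : T) x a * Y a b * x b.

Definition nonneg {R : realType} {T : finType} (Y : T -> T -> R) : Prop :=
  forall a b, 0 <= Y a b.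

Definition trace {R : realType} {T : finType} (Y : T -> T -> R) : R :=
  \sum_(a : T) Y a a.

Definition sumJ {R : realType} {T : finType} (Y : T -> T -> R) : R :=
  \sum_(a : T) \sum_(b : T) Y a b.

(* Schrijver number theta'(H) of a graph H = (T, h), as the supremum of the
   objective values of the feasible set (the maximum, which is attained). *)
Definition schrijver {R : realType} {T : finType} (h : rel T) : R :=
  sup [set v : R | exists Y : T -> T -> R,
        symm Y /\ (forall a b, h a b -> Y a b = 0) /\ trace Y = 1 /\
        psd Y /\ nonneg Y /\ v = sumJ Y].

Definition cart_Kk (k n : nat) (e : rel 'I_n) : rel ('I_k * 'I_n) :=
  fun p q => ((p.1 == q.1) && e p.2 q.2) || ((p.2 == q.2) && (p.1 != q.1)).

(* bordered matrix [1 diag(Y)^T ; diag(Y) Y] indexed by option T *)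
Definition border {R : realType} {T : finType} (Y : T -> T -> R) :
    option T -> option T -> R :=
  fun a b => match a, b with
             | None, None => 1
             | None, Some b => Y b b
             | Some a, None => Y a a
             | Some a, Some b => Y a b
             end.

Definition theta2 {R : realType} (k n : nat) (e : rel 'I_n) : R :=
  sup [set v : R | exists Y : 'I_k * 'I_n -> 'I_k * 'I_n -> R,
        symm Y /\
        (forall (r : 'I_k) (i j : 'I_n), e i j -> Y (r, i) (r, j) = 0) /\
        (forall (i : 'I_n) (r l : 'I_k), r != l -> Y (r, i) (l, i) = 0) /\
        nonneg Y /\ psd (border Y) /\
        v = \sum_(r : 'I_k) \sum_(i : 'I_n) Y (r, i) (r, i)].

Definition k_colorable_set (k n : nat) (e : rel 'I_n) (S : {set 'I_n}) : Prop :=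
  exists c : 'I_n -> 'I_k,
    forall i j, i \in S -> j \in S -> e i j -> c i != c j.

Definition alpha_k (k n : nat) (e : rel 'I_n) : nat :=
  \max_(S : {set 'I_n} | `[< k_colorable_set k e S >]) #|S|.

(* Main.v *)
Require Import Defs.
From HB Require Import structures.
From mathcomp Require Import all_boot all_order all_algebra.
From mathcomp Require Import boolp classical_sets reals.
From mathcomp Require Import ring lra.
Import Order.TTheory GRing.Theory Num.Theory.
Local Open Scope ring_scope.

Lemma sum_opt (R : nmodType) (T : finType) (F : option T -> R) :
  \sum_(a : option T) F a = F None + \sum_(a : T) F (Some a).
Proof.
rewrite (bigD1 None) //=; congr (_ + _).
rewrite (reindex_omap Some id) /=; last by case.
by apply: eq_bigl => j; rewrite eqxx.
Qed.

Definition Q {R : realType} {T : finType} (Y : T -> T -> R) (x y : T -> R) : R :=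
  \sum_(a : T) \sum_(b : T) x a * Y a b * y b.

Lemma Q_linl (R : realType) (T : finType) (Y : T -> T -> R) x z w t :
  Q Y (fun a => x a + t * z a) w = Q Y x w + t * Q Y z w.
Proof.
rewrite /Q mulr_sumr -big_split; apply: eq_bigr => a _.
rewrite mulr_sumr -big_split; apply: eq_bigr => b _ /=; ring.
Qed.

Lemma Q_sym (R : realType) (T : finType) (Y : T -> T -> R) x y :
  symm Y -> Q Y x y = Q Y y x.
Proof.
move=> HY; rewrite /Q exchange_big; apply: eq_bigr => a _; apply: eq_bigr => b _.
rewrite (HY b a); ring.
Qed.
Arguments Q_sym {R T Y} x y.

Lemma disc (R : realType) (a b c : R) : 0 <= c ->
  (forall t, 0 <= a + 2 * t * b + t ^+ 2 * c) -> b ^+ 2 <= a * c.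
Proof.
move=> c0 H; have [cz|cp] := eqVneq c 0.
  have [bz|bn] := eqVneq b 0; first by rewrite bz cz; lra.
  have := H (- (a + 1) / (2 * b)).
  have -> : a + 2 * (- (a + 1) / (2 * b)) * b + (- (a + 1) / (2 * b)) ^+ 2 * c = -1.
    by rewrite cz; field.
  lra.
have cpos : 0 < c by rewrite lt_def cp c0.
have := H (- b / c).
have -> : a + 2 * (- b / c) * b + (- b / c) ^+ 2 * c = (a * c - b ^+ 2) / c by field.
move=> h; have : 0 <= (a * c - b ^+ 2) / c * c by rewrite mulr_ge0 // ltW.
rewrite divfK //; lra.
Qed.

Lemma Q_CS (R : realType) (T : finType) (Y : T -> T -> R) x y :
  psd Y -> Q Y x y ^+ 2 <= Q Y x x * Q Y y y.
Proof.
move=> [HY Hp]; apply: disc; first exact: Hp.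
move=> t; set z := (fun a => x a + t * y a).
have : 0 <= Q Y z z := Hp z.
have e1 : Q Y z z = Q Y x z + t * Q Y y z by rewrite /z Q_linl.
have e2 : Q Y x z = Q Y x x + t * Q Y x y.
  by rewrite (Q_sym x z HY) /z Q_linl (Q_sym y x HY).
have e3 : Q Y y z = Q Y y x + t * Q Y y y.
  by rewrite (Q_sym y z HY) /z Q_linl (Q_sym x y HY).
rewrite e1 e2 e3 (Q_sym y x HY) => h; congr (0 <= _): h; ring.
Qed.

Arguments Q_CS {R T Y} x y.

Definition ind {R : realType} {T : finType} (a : T) : T -> R := fun c => (c == a)%:R.

Lemma sum_indl (R : realType) (T : finType) (a : T) (F : T -> R) :
  \sum_c (c == a)%:R * F c = F a.
Proof.
rewrite (bigD1 a) //= eqxx mul1r big1 ?addr0 // => c /negbTE ->; by rewrite mul0r.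
Qed.

Arguments sum_indl {R T} a F.

Lemma sum_indr (R : realType) (T : finType) (a : T) (F : T -> R) :
  \sum_c F c * (c == a)%:R = F a.
Proof. by rewrite -[RHS](sum_indl a); apply: eq_bigr => c _; rewrite mulrC. Qed.

Arguments sum_indr {R T} a F.

Lemma Q_ind (R : realType) (T : finType) (Y : T -> T -> R) a b :
  Q Y (ind a) (ind b) = Y a b.
Proof.
rewrite /Q /ind -[RHS](sum_indl a (fun c => Y c b)); apply: eq_bigr => c _.
rewrite -(sum_indr b (fun d => (c == a)%:R * Y c d)).
by apply: eq_bigr => d _.
Qed.

Lemma Q_indl1 (R : realType) (T : finType) (Y : T -> T -> R) a :
  Q Y (ind a) (fun=> 1) = \sum_b Y a b.
Proof.
rewrite /Q /ind -[RHS](sum_indl a (fun c => \sum_b Y c b)); apply: eq_bigr => c _.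
by rewrite mulr_sumr; apply: eq_bigr => d _; rewrite mulr1.
Qed.

Lemma Q_11 (R : realType) (T : finType) (Y : T -> T -> R) :
  Q Y (fun=> 1) (fun=> 1) = sumJ Y.
Proof. by apply: eq_bigr => a _; apply: eq_bigr => b _; rewrite mulr1 mul1r. Qed.

Lemma le_sum1 (R : realType) (T : finType) (F : T -> R) a :
  (forall b, 0 <= F b) -> F a <= \sum_b F b.
Proof.
move=> H; rewrite (bigD1 a) //= lerDl; apply: sumr_ge0 => b _; exact: H.
Qed.

Lemma border_form (R : realType) (T : finType) (X : T -> T -> R) (x : option T -> R) :
  \sum_a \sum_b x a * border X a b * x b =
  x None ^+ 2 + 2 * x None * \sum_a x (Some a) * X a a
  + Q X (fun a => x (Some a)) (fun a => x (Some a)).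
Proof.
have inner : forall a, \sum_b x a * border X a b * x b =
  x a * border X a None * x None + \sum_b x a * border X a (Some b) * x (Some b).
  by move=> a; rewrite sum_opt.
under eq_bigr => a _ do rewrite inner.
rewrite sum_opt /= big_split /=.
have e1 : \sum_b x None * X b b * x (Some b) = x None * \sum_a x (Some a) * X a a.
  by rewrite mulr_sumr; apply: eq_bigr => a _; ring.
have e2 : \sum_a x (Some a) * X a a * x None = x None * \sum_a x (Some a) * X a a.
  by rewrite mulr_sumr; apply: eq_bigr => a _; ring.
rewrite e1 e2 /Q; ring.
Qed.

Lemma psd_border (R : realType) (T : finType) (X : T -> T -> R) :
  psd (border X) <-> symm X /\ forall x0 (x : T -> R),
    0 <= x0 ^+ 2 + 2 * x0 * \sum_a x a * X a a + Q X x x.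
Proof.
split.
  move=> [Hs Hp]; split; first by move=> a b; exact: (Hs (Some a) (Some b)).
  move=> x0 x; have := Hp (fun o => if o is Some a then x a else x0).
  by rewrite border_form.
move=> [Hs Hp]; split; first by case=> [a|] [b|] //=.
by move=> x; rewrite border_form; exact: Hp.
Qed.

Lemma trace_le_sumJ (R : realType) (T : finType) (Y : T -> T -> R) :
  nonneg Y -> trace Y <= sumJ Y.
Proof.
move=> Hn; rewrite /trace /sumJ; apply: ler_sum => a _; apply: le_sum1 => b; exact: Hn.
Qed.

Lemma dir1 (R : realType) (T : finType) (Y : T -> T -> R) :
  trace Y = 1 -> psd Y -> nonneg Y ->
  exists X : T -> T -> R, symm X /\ (forall a b, Y a b = 0 -> X a b = 0) /\
    nonneg X /\ psd (border X) /\ sumJ Y <= trace X.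
Proof.
move=> Htr Hpsd Hn; have HY := Hpsd.1.
set v := sumJ Y.
have v1 : 1 <= v by rewrite -Htr; exact: trace_le_sumJ.
have vp : 0 < v by apply: lt_le_trans v1.
set s := fun a => \sum_b Y a b.
set t := fun a => s a / Y a a.
have s0 : forall a, 0 <= s a by move=> a; apply: sumr_ge0 => b _; exact: Hn.
have t0 : forall a, 0 <= t a by move=> a; apply: divr_ge0.
have cs2 : forall a, s a ^+ 2 <= Y a a * v.
  move=> a; have := Q_CS (ind a) (fun=> 1) Hpsd.
  by rewrite Q_indl1 Q_ind Q_11.
have key : forall a, t a * t a * Y a a = t a * s a.
  move=> a; have [z|nz] := eqVneq (Y a a) 0.
    by rewrite /t z invr0 !mulr0 !mul0r.
  by rewrite -mulrA /t divfK.
exists (fun a b => t a * t b * Y a b / v); split; [|split; [|split; [|split]]].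
- by move=> a b; rewrite HY; congr (_ / _); ring.
- by move=> a b ->; rewrite mulr0 mul0r.
- move=> a b; apply: divr_ge0; last exact: ltW.
  by apply: mulr_ge0; [apply: mulr_ge0|exact: Hn].
- apply/psd_border; split.
    by move=> a b; rewrite HY; congr (_ / _); ring.
  move=> x0 x; set z := fun a => x a * t a.
  have eA : \sum_a x a * (t a * t a * Y a a / v) = Q Y z (fun=> 1) / v.
    rewrite /Q mulr_suml; apply: eq_bigr => a _; rewrite key.
    have -> : \sum_b z a * Y a b * 1 = z a * s a.
      by rewrite /s mulr_sumr; apply: eq_bigr => b _; rewrite mulr1.
    rewrite /z; field; exact: lt0r_neq0.
  have eQ : Q (fun a b => t a * t b * Y a b / v) x x = Q Y z z / v.
    rewrite /Q mulr_suml; apply: eq_bigr => a _; rewrite mulr_suml.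
    apply: eq_bigr => b _; rewrite /z; field; exact: lt0r_neq0.
  rewrite eA eQ.
  have cs := Q_CS z (fun=> 1) Hpsd; rewrite Q_11 -/v in cs.
  have -> : x0 ^+ 2 + 2 * x0 * (Q Y z (fun=> 1) / v) + Q Y z z / v =
     (x0 + Q Y z (fun=> 1) / v) ^+ 2 + (Q Y z z * v - Q Y z (fun=> 1) ^+ 2) / (v ^+ 2).
    field; exact: lt0r_neq0.
  apply: addr_ge0; first exact: sqr_ge0.
  by apply: divr_ge0; [rewrite subr_ge0|exact: sqr_ge0].
- have term : forall a, 0 <= t a * s a - 2 * v * s a + v ^+ 2 * Y a a.
    move=> a; have [z|nz] := eqVneq (Y a a) 0.
      have : s a ^+ 2 <= 0 by rewrite -(mul0r v) -z.
      have := sqr_ge0 (s a) => h1 h2.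
      have : s a ^+ 2 = 0 by apply: le_anti; rewrite h1 h2.
      move/eqP; rewrite sqrf_eq0 => /eqP sz.
      rewrite z sz /t z invr0; lra.
    have ypos : 0 < Y a a by rewrite lt_def nz Hn.
    have -> : t a * s a - 2 * v * s a + v ^+ 2 * Y a a = (s a - v * Y a a) ^+ 2 / Y a a.
      by rewrite /t; field.
    by apply: divr_ge0; [exact: sqr_ge0|exact: ltW].
  have hs : \sum_a s a = v by [].
  have : 0 <= \sum_a (t a * s a - 2 * v * s a + v ^+ 2 * Y a a) by apply: sumr_ge0 => a _; exact: term.
  rewrite big_split sumrB /= -!mulr_sumr hs.
  have -> : \sum_a Y a a = 1 by exact: Htr.
  move=> h.
  have e : trace (fun a b => t a * t b * Y a b / v) = (\sum_a t a * s a) / v.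
    rewrite /trace mulr_suml; apply: eq_bigr => a _; by rewrite key.
  rewrite e ler_pdivlMr //; lra.
Qed.

Lemma dir2 (R : realType) (T : finType) (X : T -> T -> R) :
  nonneg X -> psd (border X) -> 0 < trace X ->
  exists Y : T -> T -> R, symm Y /\ (forall a b, X a b = 0 -> Y a b = 0) /\
    trace Y = 1 /\ psd Y /\ nonneg Y /\ trace X <= sumJ Y.
Proof.
move=> Hn /psd_border [HX Hp] tp; set t := trace X.
have tn : t != 0 by exact: lt0r_neq0.
exists (fun a b => X a b / t); split; [|split; [|split; [|split; [|split]]]].
- by move=> a b; rewrite HX.
- by move=> a b ->; rewrite mul0r.
- by rewrite /trace -mulr_suml divff.
- split; first by move=> a b; rewrite HX.
  move=> x; have := Hp 0 x; rewrite expr0n /= mulr0 !mul0r !add0r => h.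
  have -> : \sum_a \sum_b x a * (X a b / t) * x b = Q X x x / t.
    rewrite /Q mulr_suml; apply: eq_bigr => a _; rewrite mulr_suml.
    by apply: eq_bigr => b _; field.
  by apply: divr_ge0 => //; exact: ltW.
- by move=> a b; apply: divr_ge0 => //; exact: ltW.
- have := Hp (- t) (fun=> 1); rewrite Q_11.
  have -> : \sum_a 1 * X a a = t by apply: eq_bigr => a _; rewrite mul1r.
  move=> h.
  have -> : sumJ (fun a b => X a b / t) = sumJ X / t.
    rewrite /sumJ mulr_suml; apply: eq_bigr => a _; by rewrite mulr_suml.
  rewrite ler_pdivlMr //; nra.
Qed.

Lemma sumJ_bound (R : realType) (T : finType) (Y : T -> T -> R) :
  trace Y = 1 -> psd Y -> nonneg Y -> sumJ Y <= 2 *+ #|T| *+ #|T|.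
Proof.
move=> Htr Hpsd Hn.
have d1 : forall a, Y a a <= 1.
  move=> a; rewrite -Htr /trace; apply: (@le_sum1 R T (fun b => Y b b) a) => b; exact: Hn.
have le2 : forall a b, Y a b <= 2.
  move=> a b; have := Q_CS (ind a) (ind b) Hpsd; rewrite !Q_ind => h.
  have := d1 a; have := d1 b; have := Hn a a; have := Hn b b; have := Hn a b.
  nra.
rewrite /sumJ -sumr_const; apply: ler_sum => a _.
rewrite -sumr_const; apply: ler_sum => b _; exact: le2.
Qed.

Lemma sup_eq (R : realType) (A B : set R) (N : R) :
  (forall v, A v -> v <= N) -> (forall w, B w -> w <= N) -> B 0 ->
  (forall v, A v -> 0 <= v) ->
  (forall v, A v -> exists2 w, B w & v <= w) ->
  (forall w, B w -> w <= 0 \/ exists2 v, A v & w <= v) ->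
  sup A = sup B.
Proof.
move=> ubA ubB B0 A0 HA HB.
have hsB : has_sup B by split; [exists 0 | exists N => w Bw; exact: ubB].
have supB : forall w, B w -> w <= sup B by move=> w Bw; exact: (sup_upper_bound hsB).
case: (pselect (exists v, A v)) => [[v0 Av0]|nA].
  have hsA : has_sup A by split; [exists v0 | exists N => v Av; exact: ubA].
  have supA : forall v, A v -> v <= sup A by move=> v Av; exact: (sup_upper_bound hsA).
  apply: le_anti; apply/andP; split.
    apply: ge_sup; first by exists v0.
    move=> v Av; have [w Bw vw] := HA v Av; apply: le_trans vw _; exact: supB.
  apply: ge_sup; first by exists 0.
  move=> w Bw; case: (HB w Bw) => [w0|[v Av wv]].
    apply: le_trans w0 _; apply: le_trans (A0 v0 Av0) _; exact: supA.
  apply: le_trans wv _; exact: supA.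
have -> : A = set0.
  by apply/seteqP; split => // v Av; exfalso; apply: nA; exists v.
rewrite sup0; apply: le_anti; apply/andP; split; first exact: supB 0 B0.
apply: ge_sup; first by exists 0.
move=> w Bw; case: (HB w Bw) => [//|[v Av _]]; exfalso; apply: nA; by exists v.
Qed.

Lemma col_feas (R : realType) (k n : nat) (e : rel 'I_n) (S : {set 'I_n}) (c : 'I_n -> 'I_k) :
  (forall i j, i \in S -> j \in S -> e i j -> c i != c j) ->
  exists Y : 'I_k * 'I_n -> 'I_k * 'I_n -> R,
        symm Y /\
        (forall (r : 'I_k) (i j : 'I_n), e i j -> Y (r, i) (r, j) = 0) /\
        (forall (i : 'I_n) (r l : 'I_k), r != l -> Y (r, i) (l, i) = 0) /\
        nonneg Y /\ psd (border Y) /\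
        #|S|%:R = \sum_(r : 'I_k) \sum_(i : 'I_n) Y (r, i) (r, i).
Proof.
move=> H.
pose x := fun p : 'I_k * 'I_n => ((p.2 \in S) && (c p.2 == p.1))%:R : R.
have xx : forall p, x p * x p = x p.
  by move=> p; rewrite /x; case: (_ && _); rewrite ?mulr1 ?mulr0.
exists (fun p q => x p * x q); split; [|split; [|split; [|split; [|split]]]].
- by move=> a b; rewrite mulrC.
- move=> r i j eij; rewrite /x /=.
  case: (boolP (i \in S)) => Si; case: (boolP (j \in S)) => Sj;
    case: eqP => ci; case: eqP => cj //=; rewrite ?mul0r ?mulr0 //.
  by have := H i j Si Sj eij; rewrite ci cj eqxx.
- move=> i r l rl; rewrite /x /=.
  case: (_ \in _); case: eqP => ci; case: eqP => cj //=; rewrite ?mul0r ?mulr0 //.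
  by move: rl; rewrite -ci -cj eqxx.
- by move=> a b; apply: mulr_ge0; apply: ler0n.
- apply/psd_border; split; first by move=> a b; rewrite mulrC.
  move=> x0 y.
  have eD : \sum_a y a * (x a * x a) = \sum_a y a * x a.
    by apply: eq_bigr => a _; rewrite xx.
  have eQ : Q (fun p q => x p * x q) y y = (\sum_a y a * x a) ^+ 2.
    rewrite /Q expr2 mulr_suml; apply: eq_bigr => a _; rewrite mulr_sumr.
    by apply: eq_bigr => b _; ring.
  rewrite eD eQ.
  have -> : x0 ^+ 2 + 2 * x0 * \sum_a y a * x a + (\sum_a y a * x a) ^+ 2 =
    (x0 + \sum_a y a * x a) ^+ 2 by ring.
  exact: sqr_ge0.
- under eq_bigr => r _ do under eq_bigr => i _ do rewrite xx.
  rewrite exchange_big /=.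
  have -> : \sum_i \sum_r x (r, i) = \sum_i (i \in S)%:R.
    apply: eq_bigr => i _; rewrite /x /=; case: (boolP (i \in S)) => Si /=.
      rewrite -[RHS](sum_indl (c i) (fun=> 1)); apply: eq_bigr => r _.
      by rewrite mulr1 eq_sym.
    by rewrite big1.
  rewrite -sum1_card natr_sum big_mkcond /=; apply: eq_bigr => i _.
  by case: (i \in S).
Qed.

Arguments dir1 {R T Y}.
Arguments dir2 {R T X}.
Arguments sumJ_bound {R T Y}.
Arguments trace_le_sumJ {R T Y}.

Theorem lemma4 (R : realType) (n k : nat) (e : rel 'I_n) :
  simple_graph e -> (1 <= k)%N ->
  @schrijver R _ (@cart_Kk k n e) = @theta2 R k n e /\
  ((@alpha_k k n e)%:R <= @theta2 R k n e).
Proof.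
move=> _ _.
have ptr : forall Y : 'I_k * 'I_n -> 'I_k * 'I_n -> R,
    \sum_(r : 'I_k) \sum_(i : 'I_n) Y (r, i) (r, i) = trace Y.
  by move=> Y; rewrite /trace pair_big; apply: eq_bigr => [[r i]] _.
rewrite /schrijver /theta2.
match goal with |- sup ?A = sup ?B /\ _ => set As := A; set Bs := B end.
set N : R := 2 *+ #|{: 'I_k * 'I_n}| *+ #|{: 'I_k * 'I_n}|.
have N0 : 0 <= N by rewrite /N !mulrn_wge0.
have ubB : forall w, Bs w -> w <= N.
  move=> w [X [HX [Hz1 [Hz2 [Hn [Hp ->]]]]]]; rewrite ptr.
  case: (lerP (trace X) 0) => [t0|tp]; first exact: le_trans t0 N0.
  have [Y [_ [_ [Htr [HpY [HnY le]]]]]] := dir2 Hn Hp tp.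
  apply: le_trans le _; exact: sumJ_bound.
have B0 : Bs 0.
  exists (fun _ _ => 0); split; [by []|split; [by []|split; [by []|split; [by move=> ? ?|split]]]].
    apply/psd_border; split => // x0 x.
    have -> : Q (fun _ _ => (0 : R)) x x = 0.
      by rewrite /Q big1 // => a _; rewrite big1 // => b _; rewrite mulr0 mul0r.
    have -> : \sum_a x a * (0 : R) = 0 by rewrite big1 // => a _; rewrite mulr0.
    by rewrite mulr0 !addr0 sqr_ge0.
  by rewrite big1 // => r _; rewrite big1.
have supB : forall w, Bs w -> w <= sup Bs.
  have hsB : has_sup Bs by split; [exists 0 | exists N => w Bw; exact: ubB].
  by move=> w Bw; exact: (sup_upper_bound hsB).
split.
  apply: (@sup_eq R As Bs N) => //.
  - move=> v [Y [HY [Hz [Htr [Hp [Hn ->]]]]]]; exact: sumJ_bound.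
  - move=> v [Y [HY [Hz [Htr [Hp [Hn ->]]]]]].
    by apply: le_trans (trace_le_sumJ Hn); rewrite Htr.
  - move=> v [Y [HY [Hz [Htr [Hp [Hn ->]]]]]].
    have [X [HX [HX0 [HnX [HpX le]]]]] := dir1 Htr Hp Hn.
    exists (trace X) => //.
    exists X; split => //; split; [|split; [|split => //; split => //]].
    + move=> r i j eij; apply: HX0; apply: Hz.
      by rewrite /cart_Kk /= eqxx eij.
    + move=> i r l rl; apply: HX0; apply: Hz.
      by rewrite /cart_Kk /= eqxx rl orbT.
  - move=> w [X [HX [Hz1 [Hz2 [Hn [Hp ->]]]]]]; rewrite ptr.
    case: (lerP (trace X) 0) => [t0|tp]; first by left.
    right; have [Y [HY [HY0 [Htr [HpY [HnY le]]]]]] := dir2 Hn Hp tp.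
    exists (sumJ Y) => //.
    exists Y; split => //; split; last by [].
    move=> [r i] [l j]; rewrite /cart_Kk /= => /orP [/andP [/eqP rl eij] | /andP [/eqP ij rl]];
      apply: HY0; rewrite -?rl -?ij; [exact: Hz1 | exact: Hz2].
rewrite /alpha_k.
apply: (big_ind (fun m : nat => m%:R <= sup Bs)).
- by apply: supB.
- by move=> a b ha hb; case: (leqP a b) => h.
- move=> S /asboolP [c Hc]; apply: supB.
  have [Y HY] := @col_feas R k n e S c Hc; by exists Y.
Qed.
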